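(* Let $b,m>1$ be integers with $\gcd(b,m)=1$, and let $\frac{1}{m}=(0.\,a_1a_2\cdots a_i\cdots)_b$ be the base-$b$ expansion of $\frac1m$ (so $\frac1m=\sum_{i\ge1}a_ib^{-i}$ with digits $a_i\in\{0,\dots,b-1\}$). Then for every positive integer $t$, the base-$(b+mt)$ expansion of $\frac1m$ is \[ \tfrac{1}{m}=(0.\,a'_1a'_2\cdots a'_i\cdots)_{b+mt}, \] where for each $i\ge1$, $a'_i=a_i+t\,k_i$ with $k_i=(b^{i-1}\bmod m)$.
   Context: For integers $x$ and $m>0$, $x \bmod m$ denotes the least nonnegative residue of $x$ modulo $m$. The notation $(0.\,c_1c_2\cdots)_B$ denotes the number $\sum_{i\ge1}c_iB^{-i}$ with digits $c_i\in\{0,\dots,B-1\}$. *)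

(* Defs.v *)
From Stdlib Require Import Reals Arith.
Open Scope R_scope.

(* a : nat -> nat is a base-B digit sequence (digits a 1, a 2, ...; a 0 unused)
   with (0. a_1 a_2 ...)_B = x, i.e. x = sum_{i>=1} a_i B^{-i}. *)
Definition is_base_expansion (B : nat) (a : nat -> nat) (x : R) : Prop :=
  (forall i : nat, (1 <= i)%nat -> (a i < B)%nat) /\
  infinite_sum (fun n : nat => INR (a (S n)) / (INR B) ^ (S n)) x.

(* Main.v *)
Require Import Defs.
From Stdlib Require Import Reals Arith Lia Lra.
Open Scope R_scope.

Fixpoint P (c : nat -> nat) (B : nat) (n : nat) : nat :=
  match n with O => O | S k => (B * P c B k + c (S k))%nat end.

Lemma sum_P c B n : (0 < B)%nat ->
  sum_f_R0 (fun k => INR (c (S k)) / INR B ^ S k) n = INR (P c B (S n)) / INR B ^ (S n).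
Proof.
  intros HB. assert (HB' : 0 < INR B) by (apply lt_0_INR; lia).
  assert (Hp : forall k, 0 < INR B ^ k) by (intro; apply pow_lt; lra).
  induction n as [|n IH].
  - simpl. rewrite plus_INR, mult_INR. simpl. field. lra.
  - rewrite tech5, IH. change (P c B (S (S n))) with (B * P c B (S n) + c (S (S n)))%nat.
    rewrite plus_INR, mult_INR.
    replace (INR B ^ S (S n)) with (INR B * INR B ^ S n) by (simpl; ring).
    field. split; apply Rgt_not_eq; [apply Hp| lra].
Qed.

Definition d (m B i : nat) : nat := (B * (B ^ (i - 1) mod m) / m)%nat.

Lemma P_d m B n : (1 < m)%nat -> P (d m B) B n = (B ^ n / m)%nat.
Proof.
  intros Hm. induction n as [|n IH].
  - simpl. rewrite Nat.div_small; lia.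
  - simpl P. rewrite IH. unfold d. replace (S n - 1)%nat with n by lia.
    replace (B ^ S n)%nat with (B * (m * (B ^ n / m) + B ^ n mod m))%nat by (rewrite <- Nat.div_mod_eq; simpl; ring).
    replace (B * (m * (B ^ n / m) + B ^ n mod m))%nat with
      (B * (B ^ n mod m) + (B * (B ^ n / m)) * m)%nat by ring.
    rewrite Nat.div_add by lia. lia.
Qed.

Lemma P_ext c c' B n : (forall i, (1 <= i)%nat -> c i = c' i) -> P c B n = P c' B n.
Proof. intros H; induction n; simpl; auto. rewrite IHn, H; auto; lia. Qed.

Lemma const_cv c : Un_cv (fun _ => c) c.
Proof. intros e He. exists O. intros. unfold Rdist. rewrite Rminus_diag, Rabs_R0. lra. Qed.
Section U.
Variables (b m : nat) (a : nat -> nat).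
Hypothesis Hb : (1 < b)%nat.
Hypothesis Hm : (1 < m)%nat.
Hypothesis Hdig : forall i, (1 <= i)%nat -> (a i < b)%nat.
Let g := fun k => INR (a (S k)) / INR b ^ S k.
Hypothesis Hsum : Un_cv (fun n => sum_f_R0 g n) (1 / INR m).

Lemma bpos : 0 < INR b. Proof. apply lt_0_INR; lia. Qed.
Lemma bppos k : 0 < INR b ^ k. Proof. apply pow_lt, bpos. Qed.

Lemma g_bound k : 0 <= g k <= / INR b ^ k - / INR b ^ S k.
Proof.
  unfold g. pose proof (bppos k). pose proof bpos.
  assert (H1 : INR (a (S k)) <= INR b - 1).
  { assert (INR (S (a (S k))) <= INR b) by (apply le_INR; pose proof (Hdig (S k)); lia).
    rewrite S_INR in H1. lra. }
  pose proof (pos_INR (a (S k))).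
  replace (/ INR b ^ k - / INR b ^ S k) with ((INR b - 1) / INR b ^ S k)
    by (simpl; field; lra).
  assert (0 < / INR b ^ S k) by (apply Rinv_0_lt_compat, bppos).
  split; unfold Rdiv; [apply Rmult_le_pos | apply Rmult_le_compat_r]; lra.
Qed.

Lemma tail n k : sum_f_R0 g n <= sum_f_R0 g (n + k) <=
   sum_f_R0 g n + / INR b ^ S n - / INR b ^ S (n + k).
Proof.
  induction k as [|k IH].
  - rewrite Nat.add_0_r. lra.
  - replace (n + S k)%nat with (S (n + k)) by lia. rewrite tech5.
    pose proof (g_bound (S (n + k))). lra.
Qed.

Lemma bounds n : sum_f_R0 g n <= 1 / INR m <= sum_f_R0 g n + / INR b ^ S n.
Proof.
  split.
  - apply (growing_ineq (fun N => sum_f_R0 g N)); [| exact Hsum].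
    intro N. rewrite tech5. pose proof (g_bound (S N)). lra.
  - apply (Rle_cv_lim (Un := fun N => sum_f_R0 g N) (Vn := fun _ => sum_f_R0 g n + / INR b ^ S n));
      [| exact Hsum | apply const_cv].
    intro N. destruct (le_lt_dec N n) as [h|h].
    + pose proof (tail N (n - N)). replace (N + (n - N))%nat with n in H by lia.
      pose proof (Rinv_0_lt_compat _ (bppos (S n))). lra.
    + pose proof (tail n (N - n)). replace (n + (N - n))%nat with N in H by lia.
      pose proof (Rinv_0_lt_compat _ (bppos (S N))). lra.
Qed.
End U.
Lemma pow_mod_nz b m n : (1 < m)%nat -> Nat.gcd b m = 1%nat -> (b ^ n mod m <> 0)%nat.
Proof.
  intros Hm Hg Hc. apply Nat.Lcm0.mod_divide in Hc.
  induction n as [|n IH].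
  - simpl in Hc. apply Nat.divide_1_r in Hc. lia.
  - apply IH. simpl in Hc. apply (Nat.gauss m b); auto.
    rewrite Nat.gcd_comm; auto.
Qed.

Lemma uniq (b m : nat) (a : nat -> nat) : (1 < b)%nat -> (1 < m)%nat -> Nat.gcd b m = 1%nat ->
  (forall i, (1 <= i)%nat -> (a i < b)%nat) ->
  Un_cv (fun n => sum_f_R0 (fun k => INR (a (S k)) / INR b ^ S k) n) (1 / INR m) ->
  forall n, P a b n = (b ^ n / m)%nat.
Proof.
  intros Hb Hm Hg Hdig Hsum n. destruct n as [|n].
  - simpl. rewrite Nat.div_small; lia.
  - pose proof (bounds b m a Hb Hm Hdig Hsum n) as Hbd.
    rewrite sum_P in Hbd by lia.
    assert (HX : 0 < INR b ^ S n) by (apply pow_lt, lt_0_INR; lia).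
    assert (Hmr : 0 < INR m) by (apply lt_0_INR; lia).
    set (q := P a b (S n)) in *. rewrite <- pow_INR in *.
    set (X := (b ^ S n)%nat) in *.
    assert (H1 : (m * q <= X)%nat).
    { apply INR_le. rewrite mult_INR. destruct Hbd as [Hl _].
      apply (Rmult_le_compat_r (INR m * INR X)) in Hl; [|nra].
      replace (INR q / INR X * (INR m * INR X)) with (INR m * INR q) in Hl by (field; lra).
      replace (1 / INR m * (INR m * INR X)) with (INR X) in Hl by (field; lra). lra. }
    assert (H2 : (X <= m * q + m)%nat).
    { apply INR_le. rewrite plus_INR, mult_INR. destruct Hbd as [_ Hl].
      apply (Rmult_le_compat_r (INR m * INR X)) in Hl; [|nra].
      replace ((INR q / INR X + / INR X) * (INR m * INR X)) with (INR m * INR q + INR m) in Hl by (field; lra).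
      replace (1 / INR m * (INR m * INR X)) with (INR X) in Hl by (field; lra). lra. }
    pose proof (pow_mod_nz b m (S n) Hm Hg). fold X in H.
    pose proof (Nat.div_mod_eq X m). pose proof (Nat.mod_upper_bound X m ltac:(lia)).
    set (Q := (X / m)%nat) in *. set (r := (X mod m)%nat) in *.
    destruct (lt_eq_lt_dec q Q) as [[h|h]|h]; auto.
    + assert (m * q + m <= m * Q)%nat by nia. lia.
    + assert (m * Q + m <= m * q)%nat by nia. lia.
Qed.
Lemma powmod_shift b m t n : ((b + m * t) ^ n mod m = b ^ n mod m)%nat.
Proof.
  induction n as [|n IH]; auto. simpl.
  rewrite Nat.Div0.mul_mod, IH.
  replace (b + m * t)%nat with (b + t * m)%nat by ring. rewrite Nat.Div0.mod_add.
  rewrite <- Nat.Div0.mul_mod. auto.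
Qed.
Lemma conv m B : (1 < m)%nat -> (1 < B)%nat ->
  Un_cv (fun n => INR (B ^ S n / m) / INR B ^ S n) (1 / INR m).
Proof.
  intros Hm HB e He.
  assert (HBr : 1 < INR B) by (apply lt_1_INR; lia).
  assert (Hmr : 0 < INR m) by (apply lt_0_INR; lia).
  destruct (pow_lt_1_zero (/ INR B)) with (y := e) as [N HN]; auto.
  { rewrite Rabs_pos_eq. rewrite <- Rinv_1; apply Rinv_lt_contravar; lra. left; apply Rinv_0_lt_compat; lra. }
  exists N. intros n Hn. unfold Rdist.
  specialize (HN (S n) ltac:(lia)). rewrite pow_inv in HN.
  assert (HX : 0 < INR B ^ S n) by (apply pow_lt; lra).
  rewrite Rabs_pos_eq in HN by (left; apply Rinv_0_lt_compat; lra).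
  pose proof (Nat.div_mod_eq (B ^ S n) m) as Hd.
  pose proof (Nat.mod_upper_bound (B ^ S n) m ltac:(lia)) as Hr.
  set (Q := (B ^ S n / m)%nat) in *. set (r := ((B ^ S n) mod m)%nat) in *.
  apply (f_equal INR) in Hd. rewrite plus_INR, mult_INR, pow_INR in Hd.
  assert (Hrr : INR r < INR m) by (apply lt_INR; lia).
  pose proof (pos_INR r).
  replace (INR Q / INR B ^ S n - 1 / INR m) with (- (INR r / (INR m * INR B ^ S n)))
    by (rewrite Hd; field; lra).
  rewrite Rabs_Ropp, Rabs_pos_eq.
  - apply Rle_lt_trans with (2 := HN).
    apply (Rmult_le_reg_r (INR m * INR B ^ S n)); [nra|].
    replace (INR r / (INR m * INR B ^ S n) * (INR m * INR B ^ S n)) with (INR r) by (field; lra).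
    replace (/ INR B ^ S n * (INR m * INR B ^ S n)) with (INR m) by (field; lra). lra.
  - unfold Rdiv. apply Rmult_le_pos; auto. left; apply Rinv_0_lt_compat; nra.
Qed.

Theorem theorem1 (b m : nat) (a : nat -> nat) :
  (1 < b)%nat -> (1 < m)%nat -> Nat.gcd b m = 1%nat ->
  is_base_expansion b a (1 / INR m) ->
  forall t : nat, (1 <= t)%nat ->
    is_base_expansion (b + m * t)
      (fun i => (a i + t * ((b ^ (i - 1)) mod m))%nat) (1 / INR m).
Proof.
  intros Hb Hm Hg [Hdig Hsum] t Ht.
  assert (Ha : forall i, (1 <= i)%nat -> a i = d m b i).
  { intros [|n] Hi; [lia|].
    pose proof (uniq b m a Hb Hm Hg Hdig Hsum (S n)) as U1.
    pose proof (uniq b m a Hb Hm Hg Hdig Hsum n) as U0.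
    pose proof (P_d m b (S n) Hm) as D1. pose proof (P_d m b n Hm) as D0.
    simpl P in U1, D1. lia. }
  set (B := (b + m * t)%nat).
  assert (Hc : forall i, (1 <= i)%nat -> (a i + t * (b ^ (i - 1) mod m))%nat = d m B i).
  { intros i Hi. rewrite Ha by auto. unfold d.
    assert (E : (B ^ (i - 1) mod m = b ^ (i - 1) mod m)%nat).
    { unfold B. apply powmod_shift. }
    rewrite E. set (r := (b ^ (i - 1) mod m)%nat). unfold B.
    replace ((b + m * t) * r)%nat with (b * r + (t * r) * m)%nat by ring.
    rewrite Nat.div_add by lia. lia. }
  split.
  - intros i Hi. rewrite Hc by auto. unfold d. apply Nat.Div0.div_lt_upper_bound.
    pose proof (Nat.mod_upper_bound (B ^ (i - 1)) m ltac:(lia)). unfold B in *. nia.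
  - unfold infinite_sum. fold B.
    eapply Un_cv_ext; [| apply (conv m B Hm ltac:(unfold B; nia))].
    intro n. rewrite (sum_P (fun i => (a i + t * (b ^ (i - 1) mod m))%nat) B n) by (unfold B; lia).
    rewrite (P_ext _ (d m B) B (S n) Hc), P_d by auto. reflexivity.
Qed.
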